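(* Let $s\ge1$ be an integer and $c=N/D$ a rational with $1/(s+1)<c<1/s$ ($N,D$ positive integers). Put $a=(s+1-1/c)N$ and $b=(1/c-s)N$ (positive integers, assuming these are integral, e.g. after scaling $N,D$). For $p\in[0,1]$ let $g_p(x,y)=p\bigl(1-(1-x)^s\bigr)+(1-p)\bigl(1-(1-y)^{s+1}\bigr)$. Then there exists $p\in[0,1]$ such that $$\max\Bigl\{g_p(x,y):0\le x,y\le1,\ \tfrac{a}{a+b}\,s\,x+\tfrac{b}{a+b}\,(s+1)\,y=1\Bigr\}=\rho(c).$$
   Context: Definition of $\rho(c)$ for $1/(s+1)<c<1/s$: with $\sigma(\alpha,m)=\bigl(1-\alpha c-(1-\alpha)/m\bigr)^m$, there is a unique $\alpha^*\in(0,1)$ with $\sigma(\alpha^*,s)=\sigma(\alpha^*,s+1)$, and $\rho(c)=1-\sigma(\alpha^*,s)$. *)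

(* Defs.v *)
From mathcomp Require Import all_boot all_order all_algebra.
From mathcomp Require Import classical_sets reals.
Set Implicit Arguments. Unset Strict Implicit. Unset Printing Implicit Defensive.
Import Order.TTheory GRing.Theory Num.Theory.
Local Open Scope ring_scope.
Local Open Scope classical_set_scope.

Definition sigma (R : realType) (c alpha : R) (m : nat) : R :=
  (1 - alpha * c - (1 - alpha) / m%:R) ^+ m.

Definition rho (R : realType) (s : nat) (c : R) : R :=
  1 - sigma c (xget 0 [set alpha : R | 0 < alpha < 1 /\
                        sigma c alpha s = sigma c alpha s.+1]) s.

Definition gp (R : realType) (s : nat) (p x y : R) : R :=
  p * (1 - (1 - x) ^+ s) + (1 - p) * (1 - (1 - y) ^+ s.+1).

(* Main.v *)
Require Import Defs.
From mathcomp Require Import all_boot all_order all_algebra.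
From mathcomp Require Import classical_sets reals.
From mathcomp Require Import topology normedtype derive ring lra.
Import Order.TTheory GRing.Theory Num.Theory numFieldNormedType.Exports.
Local Open Scope ring_scope.

Lemma tangent {R : realFieldType} (n : nat) {t u : R} : 0 <= t -> 0 <= u ->
  u ^+ n.+1 + n.+1%:R * u ^+ n * (t - u) <= t ^+ n.+1.
Proof.
move=> t0 u0; elim: n => [|n IH]; first by rewrite !expr1 expr0; lra.
have h : t * (u ^+ n.+1 + n.+1%:R * u ^+ n * (t - u)) <= t ^+ n.+2.
  by rewrite [t ^+ n.+2]exprS ler_wpM2l.
have hU : 0 <= u ^+ n by rewrite exprn_ge0.
have e : t * (u ^+ n.+1 + n.+1%:R * u ^+ n * (t - u)) -
  (u ^+ n.+2 + n.+2%:R * u ^+ n.+1 * (t - u)) = n.+1%:R * u ^+ n * (t - u) ^+ 2.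
  rewrite !exprS; ring.
have : 0 <= n.+1%:R * u ^+ n * (t - u) ^+ 2.
  by rewrite mulr_ge0 ?sqr_ge0 // mulr_ge0.
lra.
Qed.

Lemma root_ex {R : realType} {s : nat} {c : R} : (1 <= s)%N -> 0 < c ->
  c < (s%:R)^-1 ->
  exists alpha, 0 < alpha < 1 /\ sigma c alpha s = sigma c alpha s.+1.
Proof.
case: s => [//|n] _ c0 cs.
set S := n.+1%:R : R.
have S1 : 1 <= S by rewrite /S ler1n.
have S0 : S != 0 by rewrite /S pnatr_eq0.
have eS : n.+2%:R = S + 1 :> R by rewrite /S -natr1.
have S10 : S + 1 != 0 by rewrite -eS pnatr_eq0.
set f := fun a : R => sigma c a n.+1 - sigma c a n.+2.
set P : {poly R} := ((1 - S^-1)%:P + (S^-1 - c)%:P * 'X) ^+ n.+1 -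
   ((1 - (S+1)^-1)%:P + ((S+1)^-1 - c)%:P * 'X) ^+ n.+2.
have fE : forall a, f a = P.[a].
  move=> a; rewrite /f /sigma /P !hornerE eS; congr (_ ^+ _ - _ ^+ _); ring.
have c1 : c < 1 by apply: (lt_le_trans cs); rewrite invf_le1 // (lt_le_trans ltr01).
have f1 : 0 < f 1.
  rewrite /f /sigma subrr !mul0r !subr0 !mul1r [_ ^+ n.+2]exprS.
  have : 0 < (1 - c) ^+ n.+1 by rewrite exprn_gt0 // subr_gt0.
  set X := (1 - c) ^+ n.+1; nra.
have f0 : f 0 < 0.
  rewrite /f /sigma !subr0 !mul0r !subr0 !mul1r eS.
  set q := 1 - S^-1; set r := 1 - (S + 1)^-1.
  have SP : 0 < S by lra.
  have SP1 : 0 < S + 1 by lra.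
  have q0 : 0 <= q by rewrite /q subr_ge0 invf_le1 //.
  have r0 : 0 <= r by rewrite /r subr_ge0 invf_le1 //; lra.
  have Q0 : 0 < q ^+ n.
    have [->|n0] := posnP n; first by rewrite expr0.
    apply: exprn_gt0; rewrite /q subr_gt0 invf_lt1 // /S ltr1n ltnS //.
  have T := tangent n r0 q0.
  have e : r * (q ^+ n.+1 + n.+1%:R * q ^+ n * (r - q)) - q ^+ n.+1 =
     q ^+ n * (S * (S + 1) ^+ 2)^-1.
    rewrite exprS /q /r -/S; field.
    have n0' : 0 <= n%:R :> R := ler0n _ _.
    by apply/andP; split; apply: lt0r_neq0; lra.
  have h1 : r * (q ^+ n.+1 + n.+1%:R * q ^+ n * (r - q)) <= r ^+ n.+2.
    by rewrite [r ^+ n.+2]exprS ler_wpM2l.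
  have h2 : 0 < q ^+ n * (S * (S + 1) ^+ 2)^-1.
    by apply: mulr_gt0 => //; rewrite invr_gt0; apply: mulr_gt0 => //; rewrite exprn_gt0.
  move: h1 h2 e; set X := r * _; set Y := q ^+ n * _; lra.
have [a a01 fa] : exists2 a, a \in `[0, 1] & f a = 0.
  apply: IVT => //.
  - rewrite (_ : f = horner P); last exact: boolp.funext fE.
    apply: continuous_subspaceT; exact: continuous_horner.
  - have h := ltW (lt_trans f0 f1).
    rewrite min_l // max_r //; apply/andP; split; exact: ltW.
move: a01; rewrite in_itv /= => /andP[a0 a1].
exists a; split; last by apply/eqP; rewrite -subr_eq0 -/(f a) fa.
have an0 : a != 0 by apply/eqP => e0; move: fa; rewrite e0; lra.
have an1 : a != 1 by apply/eqP => e0; move: fa; rewrite e0; lra.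
by rewrite !lt_neqAle eq_sym an0 an1 a0 a1.
Qed.

Theorem mainTheorem9 (R : realType) (s N D : nat)
  (hs : (1 <= s)%N) (hN : (0 < N)%N) (hD : (0 < D)%N) :
  let c : R := N%:R / D%:R in
  let a : R := (s.+1%:R - c^-1) * N%:R in
  let b : R := (c^-1 - s%:R) * N%:R in
  (s.+1%:R)^-1 < c -> c < (s%:R)^-1 ->
  exists p : R, 0 <= p <= 1 /\
    (exists x y : R, 0 <= x <= 1 /\ 0 <= y <= 1 /\
       a / (a + b) * s%:R * x + b / (a + b) * s.+1%:R * y = 1 /\
       gp s p x y = rho s c) /\
    (forall x y : R, 0 <= x <= 1 -> 0 <= y <= 1 ->
       a / (a + b) * s%:R * x + b / (a + b) * s.+1%:R * y = 1 ->
       gp s p x y <= rho s c).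
Proof.
move=> c a b hc1 hc2.
have cP : 0 < c by rewrite /c divr_gt0 // ltr0n.
have NP : 0 < N%:R :> R by rewrite ltr0n.
have [al [[/andP[al0 al1] hsig] hal]] :
    exists al, (0 < al < 1 /\ sigma c al s = sigma c al s.+1) /\
    rho s c = 1 - sigma c al s.
  have Hx := xgetPex 0 (root_ex hs cP hc2).
  by eexists; split; [exact: Hx | rewrite /rho].
rewrite hal; clear hal.
set S := s%:R : R.
have SP : 1 <= S by rewrite /S ler1n.
have S0 : S != 0 by rewrite /S pnatr_eq0 -lt0n.
have eS : s.+1%:R = S + 1 :> R by rewrite /S -natr1.
have S10 : S + 1 != 0 by rewrite -eS pnatr_eq0.
rewrite eS in a b hc1 *.
have c0 : c != 0 by apply: lt0r_neq0.
set ci := c^-1.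
have hci1 : ci < S + 1 by rewrite /ci invf_plt ?posrE //; lra.
have hci2 : S < ci by rewrite /ci -invf_pgt ?posrE //; lra.
set lam := S + 1 - ci.
have hab : a + b = N%:R by rewrite /a /b; ring.
have ha : a / (a + b) = lam by rewrite hab /a -/ci /lam; field; apply: lt0r_neq0.
have hb : b / (a + b) = 1 - lam by rewrite hab /b -/ci /lam; field; apply: lt0r_neq0.
rewrite ha hb; clear ha hb hab a b.
set u := 1 - al * c - (1 - al) / S.
set v := 1 - al * c - (1 - al) / (S + 1).
have hsu : sigma c al s = u ^+ s by rewrite /sigma -/S.
have hsv : sigma c al s.+1 = v ^+ s.+1 by rewrite /sigma eS.
rewrite hsu; rewrite hsu hsv in hsig.
have SP0 : 0 < S by lra.
have SP1 : 0 < S + 1 by lra.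
have hi : S^-1 <= 1 by rewrite invf_le1.
have hj : (S + 1)^-1 <= S^-1 by rewrite lef_pV2 ?posrE //; lra.
have hj0 : 0 < (S + 1)^-1 by rewrite invr_gt0.
have hc2' : c < S^-1 by [].
have h1 : 0 < al * (S^-1 - c) by apply: mulr_gt0 => //; lra.
have h2 : (1 - al) * (S + 1)^-1 <= (1 - al) * S^-1.
  by apply: ler_wpM2l => //; lra.
have h3 : 0 <= (1 - al) * (S + 1)^-1 by apply: mulr_ge0 => //; lra.
have h4 : 0 <= al * c by rewrite mulr_ge0 // ltW.
have u0 : 0 < u by rewrite /u; lra.
have u1 : u <= 1 by rewrite /u; lra.
have v0 : 0 < v by rewrite /v; lra.
have v1 : v <= 1 by rewrite /v; lra.
have lam0 : 0 < lam by rewrite /lam; lra.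
have lam1 : lam < 1 by rewrite /lam; lra.
have [n en] : exists n, s = n.+1 by exists s.-1; rewrite prednK.
set U := u ^+ n.
set V := v ^+ n.+1.
have U0 : 0 < U by rewrite exprn_gt0.
have V0 : 0 < V by rewrite exprn_gt0.
have Dn0 : 0 < lam * V + (1 - lam) * U.
  have : 0 < lam * V by rewrite mulr_gt0.
  have : 0 < (1 - lam) * U by apply: mulr_gt0 => //; lra.
  lra.
have Dn0' : lam * V + (1 - lam) * U != 0 by apply: lt0r_neq0.
have feas : lam * S * (1 - u) + (1 - lam) * (S + 1) * (1 - v) = 1.
  rewrite /lam /u /v /ci; field; rewrite c0 S0 S10 //.
exists (lam * V / (lam * V + (1 - lam) * U)).
set p := lam * V / _.
have p0 : 0 <= p by rewrite /p divr_ge0 ?ltW // mulr_gt0.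
have p1 : p <= 1.
  rewrite /p ler_pdivrMr // mul1r.
  have : 0 < (1 - lam) * U by apply: mulr_gt0 => //; lra.
  lra.
split; first by rewrite p0 p1.
split.
  exists (1 - u), (1 - v); split; first by apply/andP; split; lra.
  split; first by apply/andP; split; lra.
  split => //.
  rewrite /gp !subKr -hsig; ring.
move=> x y /andP[x0 x1] /andP[y0 y1] hxy.
have T1 := @tangent _ n (1 - x) u ltac:(lra) ltac:(lra).
have T2 := @tangent _ n.+1 (1 - y) v ltac:(lra) ltac:(lra).
rewrite -/U -/V in T1 T2.
have eN : n.+1%:R = S :> R by rewrite /S en.
have eN2 : n.+2%:R = S + 1 :> R by rewrite -eS en.
rewrite eN in T1; rewrite eN2 in T2.
have key : p * (S * U * (1 - x - u)) + (1 - p) * ((S + 1) * V * (1 - y - v)) = 0.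
  have -> : p * (S * U * (1 - x - u)) + (1 - p) * ((S + 1) * V * (1 - y - v)) =
     (U * V / (lam * V + (1 - lam) * U)) *
     (lam * S * (1 - x - u) + (1 - lam) * (S + 1) * (1 - y - v)).
    by rewrite /p; field.
  have -> : lam * S * (1 - x - u) + (1 - lam) * (S + 1) * (1 - y - v) = 0.
    have -> : lam * S * (1 - x - u) + (1 - lam) * (S + 1) * (1 - y - v) =
      (lam * S * (1 - u) + (1 - lam) * (S + 1) * (1 - v)) -
      (lam * S * x + (1 - lam) * (S + 1) * y) by ring.
    by rewrite feas hxy subrr.
  by rewrite mulr0.
have q1 : 0 <= 1 - p by lra.
have H1 := ler_wpM2l p0 T1.
have H2 := ler_wpM2l q1 T2.
rewrite /gp en; rewrite en in hsig.
move: H1 H2 key hsig.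
set A := u ^+ n.+1; set B := v ^+ n.+2; set X := (1 - x) ^+ n.+1; set Y := (1 - y) ^+ n.+2.
move=> H1 H2 key hsig.
rewrite -hsig in H2.
lra.
Qed.
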